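(* Let $C\subsetneq S^n\subset\mathbb{R}^{n+1}$ be a closed convex subset of the round unit sphere with non-empty interior. Then there is a unique point $x_0\in C$ such that $d(x_0,\partial C)=\sup_{x\in C}d(x,\partial C)$. Moreover, $\sup_{y\in C}d(y,x_0)\le\frac{\pi}{2}$.
   Context: $d$ denotes the spherical (angular) metric on $S^n$; $C$ is convex if it contains the minimal geodesic segment between any two of its points at distance $<\pi$; $\partial C$ is the topological boundary of $C$ in $S^n$. *)

(* Defs.v *)
From HB Require Import structures.
From mathcomp Require Import all_boot all_order all_algebra.
From mathcomp Require Import all_classical all_reals all_analysis.
Set Implicit Arguments. Unset Strict Implicit. Unset Printing Implicit Defensive.
Import Order.TTheory GRing.Theory Num.Theory.
Local Open Scope classical_set_scope.
Local Open Scope ring_scope.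

Definition dotp (R : realType) (m : nat) (x y : 'rV[R]_m) : R :=
  \sum_(i < m) x 0 i * y 0 i.

Definition sphere (R : realType) (n : nat) : set 'rV[R]_(n.+1) :=
  [set x | dotp x x = 1].

Definition sdist (R : realType) (n : nat) (x y : 'rV[R]_(n.+1)) : R :=
  acos (dotp x y).

(* minimal geodesic segment between x and y (used when sdist x y < pi):
   {x} if x = y, otherwise the great-circle arc
   t |-> (sin((1-t)th) x + sin(t th) y) / sin th, t in [0,1], th = d(x,y). *)
Definition geod_seg (R : realType) (n : nat) (x y : 'rV[R]_(n.+1))
  : set 'rV[R]_(n.+1) :=
  let th := sdist x y in
  [set z | if x == y then z = x else
     exists t : R, 0 <= t <= 1 /\
       z = (sin ((1 - t) * th) / sin th) *: x + (sin (t * th) / sin th) *: y].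

Definition sconvex (R : realType) (n : nat) (C : set 'rV[R]_(n.+1)) : Prop :=
  C `<=` @sphere R n /\
  forall x y, C x -> C y -> sdist x y < pi -> geod_seg x y `<=` C.

Definition sclosed (R : realType) (n : nat) (C : set 'rV[R]_(n.+1)) : Prop :=
  forall x, @sphere R n x ->
    (forall e : R, 0 < e -> exists y, C y /\ sdist x y < e) -> C x.

Definition sinterior (R : realType) (n : nat) (C : set 'rV[R]_(n.+1))
  : set 'rV[R]_(n.+1) :=
  [set x | @sphere R n x /\ exists2 e : R, 0 < e &
     forall y, @sphere R n y -> sdist x y < e -> C y].

Definition sboundary (R : realType) (n : nat) (C : set 'rV[R]_(n.+1))
  : set 'rV[R]_(n.+1) :=
  [set x | @sphere R n x /\ forall e : R, 0 < e ->
     (exists y, C y /\ sdist x y < e) /\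
     (exists z, @sphere R n z /\ ~ C z /\ sdist x z < e)].

(* d(x, A) = inf_{a in A} d(x, a), as an extended real (+oo if A is empty) *)
Definition sdist_set (R : realType) (n : nat) (x : 'rV[R]_(n.+1))
  (A : set 'rV[R]_(n.+1)) : \bar R :=
  ereal_inf [set (sdist x a)%:E | a in A].

(* Main.v *)
Require Import Defs.
From HB Require Import structures.
From mathcomp Require Import all_boot all_order all_algebra.
From mathcomp Require Import all_classical all_reals all_analysis.
From mathcomp Require Import ring lra.
Import Order.TTheory GRing.Theory Num.Theory.
Local Open Scope classical_set_scope.
Local Open Scope ring_scope.
Set Implicit Arguments. Unset Strict Implicit. Unset Printing Implicit Defensive.

Section Dot.
Variables (R : realType) (m : nat).
Implicit Types (x y z : 'rV[R]_m) (a b : R).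

Lemma dotpC x y : dotp x y = dotp y x.
Proof. by apply: eq_bigr => i _; rewrite mulrC. Qed.

Lemma dotpDl x y z : dotp (x + y) z = dotp x z + dotp y z.
Proof. by rewrite /dotp -big_split; apply: eq_bigr => i _; rewrite mxE mulrDl. Qed.

Lemma dotpZl a x y : dotp (a *: x) y = a * dotp x y.
Proof. by rewrite /dotp mulr_sumr; apply: eq_bigr => i _; rewrite mxE mulrA. Qed.

Lemma dotpNl x y : dotp (- x) y = - dotp x y.
Proof. by rewrite -scaleN1r dotpZl mulN1r. Qed.

Lemma dotpBl x y z : dotp (x - y) z = dotp x z - dotp y z.
Proof. by rewrite dotpDl dotpNl. Qed.

Lemma dotpDr x y z : dotp x (y + z) = dotp x y + dotp x z.
Proof. by rewrite dotpC dotpDl !(dotpC x). Qed.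

Lemma dotpZr a x y : dotp x (a *: y) = a * dotp x y.
Proof. by rewrite dotpC dotpZl dotpC. Qed.

Lemma dotpNr x y : dotp x (- y) = - dotp x y.
Proof. by rewrite dotpC dotpNl dotpC. Qed.

Lemma dotpBr x y z : dotp x (y - z) = dotp x y - dotp x z.
Proof. by rewrite dotpDr dotpNr. Qed.

Lemma dotp0l x : dotp 0 x = 0.
Proof. by rewrite -(scale0r (0 : 'rV[R]_m)) dotpZl mul0r. Qed.

Lemma dotp0r x : dotp x 0 = 0.
Proof. by rewrite dotpC dotp0l. Qed.

Lemma dotp_ge0 x : 0 <= dotp x x.
Proof. by apply: sumr_ge0 => i _; rewrite -expr2 sqr_ge0. Qed.

Lemma dotp_eq0 x : dotp x x = 0 -> x = 0.
Proof.
move=> /eqP; rewrite psumr_eq0; last by move=> i _; rewrite -expr2 sqr_ge0.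
move=> /allP H; apply/rowP => i; rewrite mxE.
have := H i (mem_index_enum i); rewrite /= -expr2 sqrf_eq0 => /eqP //.
Qed.

Lemma dotp_gt0 x : x != 0 -> 0 < dotp x x.
Proof.
move=> nx; rewrite lt_neqAle dotp_ge0 andbT eq_sym; apply/eqP => /dotp_eq0 h.
by rewrite h eqxx in nx.
Qed.

Lemma coord_sq x i : x 0 i ^+ 2 <= dotp x x.
Proof.
rewrite /dotp (bigD1 i) //= expr2 lerDl.
by apply: sumr_ge0 => j _; rewrite -expr2 sqr_ge0.
Qed.

Lemma CS x y : dotp x y ^+ 2 <= dotp x x * dotp y y.
Proof.
have [->|ny] := eqVneq y 0; first by rewrite dotp0r dotp0l expr0n /= mulr0.
have hy := dotp_gt0 ny.
have h := dotp_ge0 (dotp y y *: x - dotp x y *: y).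
rewrite dotpBl !dotpBr !dotpZl !dotpZr (dotpC y x) in h.
have : 0 <= dotp y y * (dotp y y * dotp x x - dotp x y ^+ 2) by nra.
rewrite pmulr_rge0 // subr_ge0; nra.
Qed.

Lemma CS_abs x y : `|dotp x y| <= Num.sqrt (dotp x x * dotp y y).
Proof.
rewrite -(sqrtr_sqr (dotp x y)) ler_sqrt; last by rewrite mulr_ge0 // dotp_ge0.
by rewrite CS.
Qed.

Definition nrm x := Num.sqrt (dotp x x).
Definition normz x := (nrm x)^-1 *: x.

Lemma nrm_gt0 x : x != 0 -> 0 < nrm x.
Proof. by move=> nx; rewrite sqrtr_gt0 dotp_gt0. Qed.

Lemma nrm_sq x : nrm x ^+ 2 = dotp x x.
Proof. by rewrite sqr_sqrtr // dotp_ge0. Qed.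

Lemma normz_unit x : x != 0 -> dotp (normz x) (normz x) = 1.
Proof.
move=> nx; have h := nrm_gt0 nx; have h2 := nrm_sq x.
rewrite /normz dotpZl dotpZr -h2; field; lra.
Qed.

Lemma normzZ a x : 0 < a -> normz (a *: x) = normz x.
Proof.
move=> a0; rewrite /normz /nrm dotpZl dotpZr mulrA sqrtrM ?mulr_ge0 ?ltW //.
rewrite -expr2 sqrtr_sqr gtr0_norm // scalerA invfM mulrAC mulVf ?gt_eqF //.
by rewrite mul1r.
Qed.

Lemma normz_id x : dotp x x = 1 -> normz x = x.
Proof. by move=> h; rewrite /normz /nrm h sqrtr1 invr1 scale1r. Qed.

Lemma normz_eq x : x != 0 -> x = nrm x *: normz x.
Proof.
move=> nx; rewrite /normz scalerA mulfV ?scale1r //.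
by rewrite gt_eqF // nrm_gt0.
Qed.

Lemma normz_neq0 x : x != 0 -> normz x != 0.
Proof.
move=> nx; apply/eqP => h; have := normz_unit nx; rewrite h dotp0l.
by move/eqP; rewrite eq_sym oner_eq0.
Qed.

Lemma unit_eq x y : dotp x x = 1 -> dotp y y = 1 -> dotp x y = 1 -> x = y.
Proof.
move=> hx hy hxy; apply/eqP; rewrite -subr_eq0; apply/eqP; apply: dotp_eq0.
rewrite dotpBl !dotpBr hx hy hxy (dotpC y x) hxy; lra.
Qed.

Lemma unit_dot_le1 x y : dotp x x = 1 -> dotp y y = 1 -> -1 <= dotp x y <= 1.
Proof.
move=> hx hy; have := CS x y; rewrite hx hy mulr1 => h.
apply/andP; split; nra.
Qed.

End Dot.


Section Trig.
Variable R : realType.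

Lemma acos_ltE (u v : R) : -1 <= u <= 1 -> -1 <= v <= 1 ->
  (acos u < acos v) = (v < u).
Proof.
move=> hu hv.
rewrite -ltr_cos ?acosK ?in_itv //= ?acos_ge0 ?acos_lepi //.
Qed.

Lemma acos_leE (u v : R) : -1 <= u <= 1 -> -1 <= v <= 1 ->
  (acos u <= acos v) = (v <= u).
Proof. by move=> hu hv; rewrite !leNgt acos_ltE. Qed.

Lemma cos_in (t : R) : -1 <= cos t <= 1.
Proof. by rewrite cos_geN1 cos_le1. Qed.

Lemma pi_min_in (e : R) : 0 < e -> 0 <= Num.min e pi <= pi.
Proof.
move=> e0; apply/andP; split; first by rewrite le_min ltW // pi_ge0.
by rewrite ge_min lexx orbT.
Qed.

Lemma acos_lt_of (v e : R) : -1 <= v <= 1 -> 0 < e ->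
  cos (Num.min e pi) < v -> acos v < e.
Proof.
move=> hv e0 h.
have hm := pi_min_in e0.
have : acos v < acos (cos (Num.min e pi)) by rewrite acos_ltE // cos_in.
rewrite cosK ?in_itv //= => /lt_le_trans; apply; rewrite ge_min lexx //.
Qed.

Lemma lt_of_acos (v e : R) : -1 <= v <= 1 -> 0 <= e <= pi ->
  acos v < e -> cos e < v.
Proof.
move=> hv he h.
by rewrite -(acos_ltE hv (cos_in e)) cosK // in_itv.
Qed.

Lemma cos_min_lt1 (e : R) : 0 < e -> cos (Num.min e pi) < 1.
Proof.
move=> e0; rewrite -cos0 ltr_cos ?in_itv //= ?lexx ?pi_ge0 ?pi_min_in //.
by rewrite lt_min e0 pi_gt0.
Qed.

End Trig.

Section Geod.
Variables (R : realType) (n : nat).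
Implicit Types (x y z w : 'rV[R]_(n.+1)).

Lemma geod_in x y (al be : R) :
  dotp x x = 1 -> dotp y y = 1 -> x != y -> -1 < dotp x y ->
  0 <= al -> 0 <= be -> dotp (al *: x + be *: y) (al *: x + be *: y) = 1 ->
  geod_seg x y (al *: x + be *: y).
Proof.
move=> hx hy nxy hc1 ha hb hw.
rewrite /geod_seg /= (negbTE nxy).
set c := dotp x y.
have hc2 : c < 1.
  rewrite lt_neqAle; have := unit_dot_le1 hx hy => /andP[_ ->]; rewrite andbT.
  by apply/eqP => h; move/eqP: nxy; apply; apply: unit_eq.
have hcin : -1 <= c <= 1 by rewrite !ltW.
have hq : al ^+ 2 + 2 * al * be * c + be ^+ 2 = 1.
  move: hw; rewrite !dotpDl !dotpDr !dotpZl !dotpZr hx hy (dotpC y x) -/c.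
  move=> h; rewrite -[X in _ = X]h; ring.
set cw := al + be * c.
have hcw : dotp (al *: x + be *: y) x = cw.
  by rewrite dotpDl !dotpZl hx (dotpC y x) -/c mulr1.
have hcwin : -1 <= cw <= 1.
  by rewrite -hcw; apply: unit_dot_le1.
have hccw : c <= cw.
  case: (lerP c cw) => // h; exfalso.
  have u2 : cw ^+ 2 + be ^+ 2 * (1 - c ^+ 2) = al ^+ 2 + 2 * al * be * c + be ^+ 2.
    by rewrite /cw; ring.
  rewrite hq in u2.
  have c2 : 0 < 1 - c ^+ 2 by nra.
  case: (lerP c 0) => hc0.
    have h1 : c ^+ 2 < cw ^+ 2 by nra.
    have h2 : be ^+ 2 < 1 by nra.
    have h3 : be < 1 by nra.
    have h4 : al < c * (1 - be) by rewrite /cw in h; nra.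
    have h5 : c * (1 - be) <= 0 by nra.
    lra.
  have h0 : be * c <= cw by rewrite /cw; lra.
  have h3 : be < 1 by nra.
  have h2 : be ^+ 2 < 1 by nra.
  have h1 : c ^+ 2 < cw ^+ 2 by nra.
  have h9 : 0 <= be * c by apply: mulr_ge0; lra.
  have h6 : 0 <= cw by lra.
  have h7 : cw ^+ 2 <= c * cw by rewrite expr2; apply: ler_wpM2r; lra.
  have h8 : c * cw <= c ^+ 2 by rewrite expr2; apply: ler_wpM2l; lra.
  lra.
set th := sdist x y.
have thE : th = acos c by [].
have th0 : 0 < th by rewrite thE acos_gt0 // ltW //= hc2.
have thpi : th < pi by rewrite thE acos_ltpi // ltW //= hc1.
set ph := acos cw.
have ph0 : 0 <= ph by rewrite acos_ge0.
have phth : ph <= th by rewrite thE /ph acos_leE.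
have sth : sin th = Num.sqrt (1 - c ^+ 2) by rewrite thE sin_acos.
have sth0 : 0 < sin th by apply: sin_gt0_pi; rewrite th0 thpi.
have sph : sin ph = be * sin th.
  rewrite /ph sin_acos // sth.
  have -> : 1 - cw ^+ 2 = be ^+ 2 * (1 - c ^+ 2) by rewrite /cw; nra.
  by rewrite sqrtrM ?sqr_ge0 // sqrtr_sqr ger0_norm.
have cph : cos ph = cw by rewrite /ph acosK // in_itv.
have cth : cos th = c by rewrite thE acosK // in_itv.
exists (ph / th); split.
  apply/andP; split; first by rewrite divr_ge0 // ltW.
  by rewrite ler_pdivrMr // mul1r.
have e1 : (1 - ph / th) * th = th - ph by field; rewrite gt_eqF.
have e2 : ph / th * th = ph by field; rewrite gt_eqF.
rewrite e1 e2 sinB cph cth sph.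
congr (_ *: _ + _ *: _); rewrite /cw; field; rewrite gt_eqF //.
Qed.

End Geod.


Section Cone.
Variables (R : realType) (n : nat) (C : set 'rV[R]_(n.+1)).
Hypothesis hCS : C `<=` @sphere R n.
Hypothesis hconv : sconvex C.
Implicit Types (x y z w p q : 'rV[R]_(n.+1)).

Definition K v := v != 0 /\ C (normz v).
Definition deep x (c : R) := forall z, sphere z -> c < dotp z x -> C z.
Definition BK p (r : R) := forall w, w != 0 -> dotp (w - p) (w - p) < r ^+ 2 -> K w.

Lemma unit_neq0 x : dotp x x = 1 -> x != 0.
Proof. by move=> h; apply/eqP => e; move: h; rewrite e dotp0l => /eqP; rewrite eq_sym oner_eq0. Qed.

Lemma K_of_C x : C x -> K x.
Proof.
move=> Cx; have hx : dotp x x = 1 := hCS Cx.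
by split; [exact: unit_neq0 | rewrite normz_id].
Qed.

Lemma K_scale a v : 0 < a -> K v -> K (a *: v).
Proof.
move=> a0 [nv Cv]; split; last by rewrite normzZ.
by rewrite scaler_eq0 negb_or gt_eqF.
Qed.

Lemma K_sum a b : K a -> K b -> a + b != 0 -> K (a + b).
Proof.
move=> [na Ca] [nb Cb] nab; split => //.
set x := normz a; set y := normz b.
have hx : dotp x x = 1 := normz_unit na.
have hy : dotp y y = 1 := normz_unit nb.
have ea := normz_eq na; have eb := normz_eq nb.
have ga := nrm_gt0 na; have gb := nrm_gt0 nb.
have eab : a + b = nrm a *: x + nrm b *: y by rewrite -ea -eb.
have [exy|nxy] := eqVneq x y.
  rewrite eab -exy -scalerDl normzZ; last by lra.
  by rewrite /x normz_id.
have [hm1|hm1] := eqVneq (dotp x y) (-1).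
  have eyx : y = - x.
    apply: (@unit_eq _ _ y (- x)) => //; first by rewrite dotpNl dotpNr opprK.
    by rewrite dotpNr dotpC hm1 opprK.
  move: nab; rewrite eab eyx scalerN -scaleNr -scalerDl => nab.
  have [hlt|hge] := ltrP (nrm b) (nrm a).
    by rewrite normzZ ?subr_gt0 // normz_id.
  have [heq|hlt] := eqVneq (nrm a) (nrm b).
    by move: nab; rewrite heq subrr scale0r eqxx.
  have hlt' : nrm a < nrm b by rewrite lt_neqAle hlt hge.
  have -> : (nrm a - nrm b) *: x = (nrm b - nrm a) *: y.
    by rewrite eyx scalerN -scaleNr opprB.
  by rewrite normzZ ?subr_gt0 // normz_id.
have hc1 : -1 < dotp x y.
  by rewrite lt_neqAle eq_sym hm1 /=; case/andP: (unit_dot_le1 hx hy).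
have hlt : sdist x y < pi.
  by rewrite /sdist acos_ltpi // hc1; case/andP: (unit_dot_le1 hx hy).
apply: (hconv.2 x y Ca Cb hlt).
have gN := nrm_gt0 nab.
have hnz : normz (a + b) = (nrm a / nrm (a + b)) *: x + (nrm b / nrm (a + b)) *: y.
  by rewrite /normz {2}eab scalerDr !scalerA (mulrC _ (nrm a)) (mulrC _ (nrm b)).
rewrite hnz; apply: geod_in => //; first by rewrite divr_ge0 // ltW.
  by rewrite divr_ge0 // ltW.
rewrite -hnz; exact: normz_unit.
Qed.

Lemma BK_sum p q (s t : R) : 0 < s -> 0 < t -> BK p s -> BK q t -> BK (p + q) (s + t).
Proof.
move=> s0 t0 Bp Bq w nw hw.
set d := w - (p + q).
set l := s / (s + t).
have l0 : 0 < l by rewrite divr_gt0 // addr_gt0.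
have l1 : 1 - l = t / (s + t) by rewrite /l; field; rewrite gt_eqF // addr_gt0.
have l1' : 0 < 1 - l by rewrite l1 divr_gt0 // addr_gt0.
set a := p + l *: d; set b := q + (1 - l) *: d.
have eab : a + b = w.
  rewrite /a /b /d; apply/rowP => i; rewrite !mxE; ring.
have hd : dotp d d < (s + t) ^+ 2 by [].
have ha : dotp (a - p) (a - p) < s ^+ 2.
  have -> : a - p = l *: d by rewrite /a addrC addKr.
  rewrite dotpZl dotpZr.
  have -> : s = l * (s + t) by rewrite /l; field; rewrite gt_eqF // addr_gt0.
  by rewrite exprMn mulrA -expr2 ltr_pM2l ?exprn_gt0.
have hb : dotp (b - q) (b - q) < t ^+ 2.
  have -> : b - q = (1 - l) *: d by rewrite /b addrC addKr.
  rewrite dotpZl dotpZr.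
  have -> : t = (1 - l) * (s + t) by rewrite l1; field; rewrite gt_eqF // addr_gt0.
  by rewrite exprMn mulrA -expr2 ltr_pM2l ?exprn_gt0.
have [a0|na] := eqVneq a 0.
  have eb : b = w by rewrite -eab a0 add0r.
  by rewrite -eb; apply: Bq => //; rewrite eb.
have [b0|nb] := eqVneq b 0.
  have ea : a = w by rewrite -eab b0 addr0.
  by rewrite -ea; apply: Bp => //; rewrite ea.
rewrite -eab; apply: K_sum; [exact: Bp | exact: Bq | by rewrite eab].
Qed.

Lemma BK_translate p (s : R) y (t : R) : BK p s -> C y -> 0 < t -> BK (p + t *: y) s.
Proof.
move=> Bp Cy t0 w nw hw.
set a := w - t *: y.
have ew : w = a + t *: y by rewrite /a subrK.
have ha : dotp (a - p) (a - p) < s ^+ 2.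
  have -> : a - p = w - (p + t *: y).
    by rewrite /a; apply/rowP => i; rewrite !mxE; ring.
  by [].
have Kty : K (t *: y) by apply: K_scale => //; apply: K_of_C.
have [a0|na] := eqVneq a 0.
  by rewrite ew a0 add0r.
rewrite ew; apply: K_sum => //; [exact: Bp | by rewrite -ew].
Qed.

Lemma BK_scale p (r a : R) : 0 < a -> BK p r -> BK (a *: p) (a * r).
Proof.
move=> a0 Bp w nw hw.
have na : a != 0 by rewrite gt_eqF.
have -> : w = a *: (a^-1 *: w) by rewrite scalerA mulfV // scale1r.
apply: K_scale => //; apply: Bp.
  by rewrite scaler_eq0 negb_or invr_eq0 na.
have -> : a^-1 *: w - p = a^-1 *: (w - a *: p).
  by rewrite scalerBr scalerA mulVf // scale1r.
rewrite dotpZl dotpZr.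
have -> : r ^+ 2 = a^-1 * (a^-1 * (a * r) ^+ 2) by field.
rewrite !ltr_pM2l ?invr_gt0 //.
Qed.

Lemma BK_full p (r : R) : BK p r -> dotp p p < r ^+ 2 -> forall z, sphere z -> C z.
Proof.
move=> Bp hp z hz.
have hz1 : dotp z z = 1 := hz.
set P := dotp p p.
set dl := r ^+ 2 - P.
have dl0 : 0 < dl by rewrite subr_gt0.
have P0 : 0 <= P := dotp_ge0 p.
set e := dl / (dl + 3 + 2 * P).
have den : 0 < dl + 3 + 2 * P by lra.
have e0 : 0 < e by rewrite divr_gt0.
have e1 : e < 1 by rewrite ltr_pdivrMr // mul1r; lra.
have eM : e * (3 + 2 * P) < dl.
  rewrite /e mulrAC ltr_pdivrMr //; nra.
have hzp : dotp z p ^+ 2 <= P by have := CS z p; rewrite hz1 mul1r.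
have hzp' : `|dotp z p| <= 1 + P.
  have [h|h] := lerP `|dotp z p| 1; first by lra.
  have : `|dotp z p| <= `|dotp z p| ^+ 2 by rewrite expr2 ler_peMr // ltW.
  rewrite real_normK ?num_real //; lra.
have Kez : K (e *: z).
  apply: Bp; first by rewrite scaler_eq0 negb_or gt_eqF // unit_neq0.
  rewrite dotpBl !dotpBr !dotpZl !dotpZr hz1 (dotpC p) -/P.
  have : - `|dotp z p| <= dotp z p by rewrite lerNl -normrN ler_norm.
  have : e * e <= e by nra.
  have : e * `|dotp z p| <= e * (1 + P) by rewrite ler_pM2l.
  rewrite /dl in eM; nra.
by case: Kez => _; rewrite normzZ // normz_id.
Qed.

Lemma cap_ball x (c : R) : sphere x -> -1 <= c <= 1 -> deep x c ->
  BK x (Num.sqrt (1 - c ^+ 2)).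
Proof.
move=> hx hc D w nw hw.
have hx1 : dotp x x = 1 := hx.
have c2 : 0 <= 1 - c ^+ 2 by nra.
rewrite sqr_sqrtr // in hw.
split => //; apply: D; first exact: normz_unit.
have gN := nrm_gt0 nw; have N2 := nrm_sq w.
rewrite /normz dotpZl.
rewrite dotpBl !dotpBr hx1 (dotpC x w) in hw.
rewrite ltr_pdivlMl // mulrC.
have : 0 <= (nrm w - c) ^+ 2 by apply: sqr_ge0.
nra.
Qed.

Lemma ball_cap m (r : R) : sphere m -> 0 <= r <= 1 -> BK m r ->
  deep m (Num.sqrt (1 - r ^+ 2)).
Proof.
move=> hm hr Bm z hz hzm.
have hm1 : dotp m m = 1 := hm.
have hz1 : dotp z z = 1 := hz.
have r2 : 0 <= 1 - r ^+ 2 by nra.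
set c := Num.sqrt (1 - r ^+ 2) in hzm.
have c0 : 0 <= c by apply: sqrtr_ge0.
have cc : c ^+ 2 = 1 - r ^+ 2 by rewrite sqr_sqrtr.
set l := dotp z m in hzm *.
have l0 : 0 < l by lra.
have Kw : K (l *: z).
  apply: Bm; first by rewrite scaler_eq0 negb_or gt_eqF // unit_neq0.
  rewrite dotpBl !dotpBr !dotpZl !dotpZr hz1 hm1 (dotpC m z) -/l.
  nra.
by case: Kw => _; rewrite normzZ // normz_id.
Qed.

Lemma deep_mono x (c c' : R) : deep x c -> c <= c' -> deep x c'.
Proof. by move=> D h z hz hl; apply: D => //; lra. Qed.

Lemma deep_C x (c : R) : sphere x -> c < 1 -> deep x c -> C x.
Proof. by move=> hx hc D; apply: D => //; rewrite (hx : dotp x x = 1). Qed.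

End Cone.


Section Arc.
Variables (R : realType) (n : nat) (C : set 'rV[R]_(n.+1)).
Hypothesis hCS : C `<=` @sphere R n.
Hypothesis hcl : sclosed C.
Variables (x z : 'rV[R]_(n.+1)).
Hypothesis Cx : C x.
Hypothesis hz : sphere z.
Hypothesis nCz : ~ C z.
Variable a : R.
Hypothesis haE : dotp z x = a.
Hypothesis ha : -1 < a.

Let hx1 : dotp x x = 1 := hCS Cx.
Let hz1 : dotp z z = 1 := hz.
Let hxz : dotp x z = a. Proof. by rewrite dotpC. Qed.

Let a1 : a < 1.
Proof.
rewrite -haE lt_neqAle; have := unit_dot_le1 hz1 hx1 => /andP[_ ->]; rewrite andbT.
apply/eqP => h; apply: nCz; have -> : z = x by apply: unit_eq.
exact: Cx.
Qed.

Let w (t : R) := (1 - t) *: x + t *: z.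
Let q (t : R) := dotp (w t) (w t).

Let dotw s t : dotp (w s) (w t) = (1 - s) * (1 - t) + ((1 - s) * t + s * (1 - t)) * a + s * t.
Proof.
rewrite /w !dotpDl !dotpDr !dotpZl !dotpZr hx1 hz1 hxz (dotpC z x) hxz; ring.
Qed.

Let q_lb t : 0 <= t <= 1 -> (1 + a) / 2 <= q t.
Proof.
have a1' := a1. have ha' := ha.
move=> /andP[t0 t1]; rewrite /q dotw.
have h : 0 <= (1 - a) * (2 * t - 1) ^+ 2.
  by apply: mulr_ge0; [lra | apply: sqr_ge0].
nra.
Qed.

Let q_gt0 t : 0 <= t <= 1 -> 0 < q t.
Proof. move=> h; have := q_lb h; have := ha; lra. Qed.

Let w_neq0 t : 0 <= t <= 1 -> w t != 0.
Proof.
move=> h; apply/eqP => e; have := q_gt0 h; rewrite /q e dotp0l ltxx //.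
Qed.

Let p t := normz (w t).

Let p_unit t : 0 <= t <= 1 -> dotp (p t) (p t) = 1.
Proof. by move=> h; apply: normz_unit; apply: w_neq0. Qed.

Let p0 : p 0 = x.
Proof. by rewrite /p /w subr0 scale1r scale0r addr0 normz_id. Qed.

Let p1 : p 1 = z.
Proof. by rewrite /p /w subrr scale0r scale1r add0r normz_id. Qed.

Let dotp_p s t : 0 <= s <= 1 -> 0 <= t <= 1 ->
  dotp (p s) (p t) = dotp (w s) (w t) / (Num.sqrt (q s) * Num.sqrt (q t)).
Proof.
move=> hs ht; rewrite /p /normz /nrm dotpZl dotpZr -/(q s) -/(q t).
by rewrite invfM; field; rewrite !gt_eqF // sqrtr_gt0 q_gt0.
Qed.

Lemma arc_close s t : 0 <= s <= 1 -> 0 <= t <= 1 -> (s - t) ^+ 2 <= (1 + a) / 8 ->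
  1 - 8 * (s - t) ^+ 2 / (1 + a) <= dotp (p s) (p t).
Proof.
have a1' := a1. have ha' := ha.
move=> hs ht hst.
have qs := q_lb hs; have qt := q_lb ht.
have a0 : 0 < 1 + a by lra.
set P := dotp (p s) (p t).
have P1 : P <= 1 by case/andP: (unit_dot_le1 (p_unit hs) (p_unit ht)).
have gram : q s * q t - dotp (w s) (w t) ^+ 2 = (1 - a ^+ 2) * (s - t) ^+ 2.
  by rewrite /q !dotw; ring.
have W0 : 0 < dotp (w s) (w t).
  have e : dotp (w s) (w t) = (q s + q t - 2 * (1 - a) * (s - t) ^+ 2) / 2.
    by rewrite /q !dotw; field.
  rewrite e; apply: divr_gt0 => //.
  have : 0 < 1 - a by lra.
  nra.
have sq : Num.sqrt (q s) * Num.sqrt (q t) > 0.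
  by rewrite mulr_gt0 // sqrtr_gt0 q_gt0.
have P0 : 0 < P by rewrite /P dotp_p // divr_gt0.
have P2 : P ^+ 2 = 1 - (1 - a ^+ 2) * (s - t) ^+ 2 / (q s * q t).
  rewrite /P dotp_p // expr_div_n exprMn !sqr_sqrtr ?ltW ?q_gt0 //.
  rewrite -gram; field; rewrite !gt_eqF // q_gt0 //.
have hG : (1 - a ^+ 2) * (s - t) ^+ 2 / (q s * q t) <= 8 * (s - t) ^+ 2 / (1 + a).
  have qq : (1 + a) ^+ 2 / 4 <= q s * q t.
    have : 0 <= (1 + a) / 2 by lra.
    have -> : (1 + a) ^+ 2 / 4 = ((1 + a) / 2) * ((1 + a) / 2) by field.
    move=> h; apply: ler_pM => //.
  have qq0 : 0 < q s * q t by rewrite mulr_gt0 // q_gt0.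
  rewrite ler_pdivrMr // mulrAC ler_pdivlMr //.
  have st0 : 0 <= (s - t) ^+ 2 by apply: sqr_ge0.
  have : 0 <= 1 - a by lra.
  have e : 8 * (s - t) ^+ 2 * (q s * q t) >= 8 * (s - t) ^+ 2 * ((1 + a) ^+ 2 / 4).
    by apply: ler_wpM2l => //; rewrite mulr_ge0.
  have e2 : (1 - a ^+ 2) * (s - t) ^+ 2 * (1 + a) <= 8 * (s - t) ^+ 2 * ((1 + a) ^+ 2 / 4).
    have -> : 8 * (s - t) ^+ 2 * ((1 + a) ^+ 2 / 4) = (s - t) ^+ 2 * ((1 + a) ^+ 2 * 2) by field.
    have -> : (1 - a ^+ 2) * (s - t) ^+ 2 * (1 + a) = (s - t) ^+ 2 * ((1 + a) ^+ 2 * (1 - a)) by ring.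
    apply: ler_wpM2l => //; apply: ler_wpM2l; [exact: sqr_ge0 | lra].
  lra.
have : P ^+ 2 <= P by rewrite expr2 ger_pMl.
lra.
Qed.

Let S := [set t : R | 0 <= t <= 1 /\ C (p t)].
Let S0 : S 0. Proof. rewrite /S /=; split; [by rewrite lexx ler01 | rewrite p0; exact: Cx]. Qed.
Let Sub : ubound S 1. Proof. by move=> t [/andP[_ ->]]. Qed.
Let Shs : has_sup S. Proof. by split; [exists 0 | exists 1]. Qed.
Let T := sup S.
Let T0 : 0 <= T. Proof. exact: sup_upper_bound Shs _ S0. Qed.
Let T1 : T <= 1. Proof. by apply: ge_sup; [exists 0; exact: S0 | exact: Sub]. Qed.
Let hT : 0 <= T <= 1. Proof. by rewrite T0 T1. Qed.

Let b := p T.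

Let rad (e : R) := Num.min (Num.min ((1 + a) / 8) ((1 - cos (Num.min e pi)) * (1 + a) / 8)) 1.

Let rad_gt0 e : 0 < e -> 0 < rad e.
Proof.
have a1' := a1. have ha' := ha.
move=> e0; have := cos_min_lt1 e0; have : 0 < 1 + a by lra.
move=> h1 h2; rewrite /rad !lt_min ltr01 andbT; apply/andP; split.
  by rewrite divr_gt0.
by rewrite divr_gt0 // mulr_gt0 // subr_gt0.
Qed.

Let rad_close e t : 0 < e -> 0 <= t <= 1 -> `|t - T| < rad e -> sdist b (p t) < e.
Proof.
have a1' := a1. have ha' := ha.
move=> e0 ht htT.
have r0 := rad_gt0 e0.
have hr1 : rad e <= 1 by rewrite /rad ge_min lexx orbT.
have hr2 : rad e <= (1 + a) / 8 by rewrite /rad !ge_min lexx.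
have hr3 : rad e <= (1 - cos (Num.min e pi)) * (1 + a) / 8.
  by rewrite /rad !ge_min lexx orbT.
have sq : (T - t) ^+ 2 < rad e.
  rewrite -normrN opprB in htT.
  have : (T - t) ^+ 2 = `|T - t| ^+ 2 by rewrite real_normK // num_real.
  move=> ->; have := normr_ge0 (T - t); nra.
have a0 : 0 < 1 + a by lra.
have cl := arc_close hT ht (le_trans (ltW sq) hr2).
apply: acos_lt_of => //; first by apply: unit_dot_le1; apply: p_unit.
have : 8 * (T - t) ^+ 2 / (1 + a) < 1 - cos (Num.min e pi).
  rewrite ltr_pdivrMr //.
  have := cos_min_lt1 e0; nra.
lra.
Qed.

Let Cb : C b.
Proof.
apply: hcl; first exact: p_unit.
move=> e e0.
have [t St tT] := sup_adherent (rad_gt0 e0) Shs.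
case: St => ht Ct; exists (p t); split => //.
apply: rad_close => //.
have tle : t <= T by exact: sup_upper_bound Shs _ (conj ht Ct).
rewrite ler0_norm ?subr_le0 //; move: tT; rewrite -/T; lra.
Qed.

Let T1' : T < 1.
Proof.
rewrite lt_neqAle T1 andbT; apply/eqP => e; apply: nCz.
by rewrite -p1 -e.
Qed.

Let Bb : sboundary C b.
Proof.
have hT0 := T0; have hT1 := T1; have hT1' := T1'.
split; first exact: p_unit.
move=> e e0; split.
  by exists b; split => //; rewrite /sdist (p_unit hT) acos1.
set t := Num.min 1 (T + rad e / 2).
have r0 := rad_gt0 e0.
have tT : T < t by rewrite /t lt_min T1' /=; lra.
have ht : 0 <= t <= 1.
  apply/andP; split; last by rewrite /t ge_min lexx.
  rewrite /t le_min ler01 /=; lra.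
exists (p t); split; first exact: p_unit.
split.
  move=> Ct; have : t <= T by exact: sup_upper_bound Shs _ (conj ht Ct).
  by rewrite leNgt tT.
apply: rad_close => //.
rewrite gtr0_norm ?subr_gt0 //.
have : t <= T + rad e / 2 by rewrite /t ge_min lexx orbT.
lra.
Qed.

Let xb : a <= dotp x b.
Proof.
have a1' := a1. have ha' := ha.
have hT0 := T0; have hT1 := T1.
have qT := q_gt0 hT.
have -> : dotp x b = dotp x (w T) / Num.sqrt (q T).
  by rewrite /b /p /normz /nrm dotpZr -/(q T) mulrC.
set L := dotp x (w T).
have LE : L = 1 - T + T * a by rewrite /L /w dotpDr !dotpZr hx1 hxz; ring.
have sq0 : 0 < Num.sqrt (q T) by rewrite sqrtr_gt0.
rewrite ler_pdivlMr //.
have qE : q T = (1 - T) ^+ 2 + 2 * T * (1 - T) * a + T ^+ 2 by rewrite /q dotw; ring.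
have key : L ^+ 2 - a ^+ 2 * q T = (1 - T) * (1 - a ^+ 2) * ((1 - T) + 2 * T * a).
  by rewrite LE qE; ring.
have a2 : 0 <= 1 - a ^+ 2 by nra.
case: (lerP 0 a) => ha0.
  have L0 : a <= L.
    rewrite LE; have : 0 <= (1 - T) * (1 - a) by apply: mulr_ge0; lra.
    nra.
  have : a * Num.sqrt (q T) = Num.sqrt (a ^+ 2 * q T).
    by rewrite sqrtrM ?sqr_ge0 // sqrtr_sqr ger0_norm.
  move=> ->; rewrite -(ger0_norm (le_trans ha0 L0)) -sqrtr_sqr ler_sqrt ?sqr_ge0 //.
  rewrite -subr_ge0 key; apply: mulr_ge0; first by apply: mulr_ge0; lra.
  nra.
case: (lerP 0 L) => L0.
  have : a * Num.sqrt (q T) <= 0 by nra.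
  lra.
have : - a * Num.sqrt (q T) = Num.sqrt (a ^+ 2 * q T).
  by rewrite sqrtrM ?sqr_ge0 // sqrtr_sqr ltr0_norm.
have : - L = Num.sqrt (L ^+ 2) by rewrite sqrtr_sqr ltr0_norm.
move=> e1 e2.
have : Num.sqrt (L ^+ 2) <= Num.sqrt (a ^+ 2 * q T).
  rewrite ler_sqrt; last by rewrite mulr_ge0 ?sqr_ge0 // ltW.
  rewrite -subr_le0 key.
  have h1 : (1 - T) + 2 * T * a < 0 by rewrite LE in L0; nra.
  have h2 : 0 <= (1 - T) * (1 - a ^+ 2) by apply: mulr_ge0; lra.
  nra.
rewrite -e1 -e2 mulNr; lra.
Qed.

Lemma arc_boundary : exists b, sboundary C b /\ a <= dotp x b.
Proof. by exists b; split; [exact: Bb | exact: xb]. Qed.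

End Arc.


Section Main.
Variables (R : realType) (n : nat) (C : set 'rV[R]_(n.+1)).
Hypothesis hCS : C `<=` @sphere R n.
Hypothesis hne : C <> @sphere R n.
Hypothesis hcl : sclosed C.
Hypothesis hconv : sconvex C.
Implicit Types (x y z w p q b : 'rV[R]_(n.+1)).

Lemma not_full : exists z, sphere z /\ ~ C z.
Proof.
apply/not_existsP => h; apply: hne; apply/seteqP; split => // z hz.
by have /not_andP[] := h z => // /contrapT.
Qed.

Lemma full_contra : ~ (forall z, sphere z -> C z).
Proof. by move=> h; have [z [hz nz]] := not_full; apply: nz; apply: h. Qed.

Lemma sdist_self x : sphere x -> sdist x x = 0.
Proof. by move=> hx; rewrite /sdist (hx : dotp x x = 1) acos1. Qed.

Lemma bd_dot x (c : R) b : sphere x -> deep C x c -> sboundary C b -> dotp x b <= c.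
Proof.
move=> hx D [hb Bb].
have hx1 : dotp x x = 1 := hx. have hb1 : dotp b b = 1 := hb.
rewrite leNgt; apply/negP => hlt.
set dl := dotp x b - c.
have dl0 : 0 < dl by rewrite subr_gt0.
set et := Num.min (dl ^+ 2 / 4) 1.
have et0 : 0 < et by rewrite lt_min ltr01 andbT divr_gt0 // exprn_gt0.
have et1 : et <= 1 by rewrite ge_min lexx orbT.
have et2 : et <= dl ^+ 2 / 4 by rewrite ge_min lexx.
have vin : -1 <= 1 - et <= 1 by apply/andP; split; lra.
have e0 : 0 < acos (1 - et) by apply: acos_gt0; apply/andP; split; lra.
have [_ [z [hz [nCz hbz]]]] := Bb _ e0.
have hz1 : dotp z z = 1 := hz.
have hbz' : 1 - et < dotp b z.
  by rewrite -(acos_ltE (unit_dot_le1 hb1 hz1) vin).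
apply: nCz; apply: D => //.
have cs : (dotp z x - dotp x b) ^+ 2 <= 2 - 2 * dotp b z.
  have := CS (z - b) x; rewrite hx1 mulr1 !dotpBl !dotpBr hz1 hb1 (dotpC z b) (dotpC b x).
  by move=> h; apply: le_trans h _; lra.
rewrite /dl in dl0 et2.
rewrite ltNge; apply/negP => hle.
have : (dotp x b - c) ^+ 2 <= (dotp z x - dotp x b) ^+ 2.
  have : dotp z x - dotp x b <= - (dotp x b - c) by lra.
  nra.
nra.
Qed.

Lemma no_deep x (c : R) : C x -> -1 <= c -> ~ deep C x c ->
  exists b, sboundary C b /\ c < dotp x b.
Proof.
move=> Cx c1 nD.
have : exists z, ~ (sphere z -> c < dotp z x -> C z).
  by apply/existsNP => h; apply: nD => z; apply: h.
case=> z /not_implyP [hz /not_implyP [hzx nCz]].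
have ha : -1 < dotp z x by lra.
have [b [Bb hb]] := arc_boundary hCS hcl Cx hz nCz (erefl _) ha.
by exists b; split => //; lra.
Qed.

Lemma perp_deep x r (c : R) : sphere x -> deep C x c -> -1 <= c < 0 ->
  sphere r -> dotp r x = 0 -> deep C r (1 - c ^+ 2 / 4).
Proof.
move=> hx D /andP[c1 c0] hr rx v hv hvr.
have hx1 : dotp x x = 1 := hx. have hr1 : dotp r r = 1 := hr.
have hv1 : dotp v v = 1 := hv.
apply: D => //.
have cs : dotp v x ^+ 2 <= 2 - 2 * dotp v r.
  have := CS (v - r) x; rewrite hx1 mulr1 !dotpBl !dotpBr hv1 hr1 rx subr0 (dotpC r v).
  by move=> h; apply: le_trans h _; lra.
rewrite ltNge; apply/negP => hle.
have : c ^+ 2 <= dotp v x ^+ 2 by nra.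
nra.
Qed.

Lemma F3 x (c : R) : C x -> c < 0 -> (exists b0, sboundary C b0) -> ~ deep C x c.
Proof.
move=> Cx c0 [b0 Bb0] D0.
have hx : sphere x := hCS Cx. have hx1 : dotp x x = 1 := hx.
set c' := Num.max c (-1).
have D : deep C x c' by apply: deep_mono D0 _; rewrite le_max lexx.
have c'0 : c' < 0 by rewrite gt_max c0 /= ltrN10.
have c'1 : -1 <= c' by rewrite le_max lexx orbT.
have hb0 := bd_dot hx D Bb0.
have sxmx : sdist (- x) x = pi by rewrite /sdist dotpNl hx1 acosN1.
have hmx : sphere (- x) by rewrite /sphere /= dotpNl dotpNr opprK hx1.
have [p [hp [npx npmx]]] : exists p, sphere p /\ p <> x /\ p <> - x.
  have [bx|nbx] := eqVneq b0 (- x); last first.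
    exists b0; split; first by case: Bb0.
    split; last by move/eqP: nbx.
    move=> e; rewrite e hx1 in hb0; lra.
  have h2 : 0 < pi / 2 :> R by rewrite divr_gt0 // pi_gt0.
  case: Bb0 => _ Bb; have [[y [Cy dy]] [z [hz [nCz dz]]]] := Bb _ h2.
  rewrite bx in dy dz.
  have hpi : pi / 2 < pi :> R by have := pi_gt0 R; lra.
  have [Cmx|nCmx] := boolp.EM (C (- x)).
    exists z; split => //; split.
      by move=> e; move: dz; rewrite e sxmx; lra.
    by move=> e; apply: nCz; rewrite e.
  exists y; split; first exact: hCS.
  split; first by move=> e; move: dy; rewrite e sxmx; lra.
  by move=> e; apply: nCmx; rewrite -e.
have hp1 : dotp p p = 1 := hp.
set u := p - dotp p x *: x.
have ux : dotp u x = 0 by rewrite /u dotpBl dotpZl hx1 mulr1 subrr.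
have uu : dotp u u = 1 - dotp p x ^+ 2.
  rewrite /u dotpBl !dotpBr !dotpZl !dotpZr hp1 hx1 (dotpC x p); ring.
have nu : u != 0.
  apply/eqP => u0; move: uu; rewrite u0 dotp0l => e.
  have : (dotp p x - 1) * (dotp p x + 1) = 0 by rewrite -[LHS]/(_) ; nra.
  move/eqP; rewrite mulf_eq0 => /orP[]; rewrite ?subr_eq0 ?addr_eq0 => /eqP e2.
    by apply: npx; apply: unit_eq.
  apply: npmx; apply: (unit_eq hp1 (hmx : dotp (- x) (- x) = 1)).
  by rewrite dotpNr e2 opprK.
set r := normz u.
have hr1 : dotp r r = 1 := normz_unit nu.
have rx : dotp r x = 0 by rewrite /r /normz dotpZl ux mulr0.
have hmr1 : dotp (- r) (- r) = 1 by rewrite dotpNl dotpNr opprK.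
have mrx : dotp (- r) x = 0 by rewrite dotpNl rx oppr0.
have cc : -1 <= c' < 0 by rewrite c'1 c'0.
have Dr := perp_deep (r:=r) hx D cc hr1 rx.
have Dmr := perp_deep (r:=-r) hx D cc hmr1 mrx.
set c1 := 1 - c' ^+ 2 / 4.
have c1in : -1 <= c1 <= 1 by apply/andP; split; rewrite /c1; nra.
have Br := cap_ball (x:=r) hr1 c1in Dr.
have Bmr := cap_ball (x:=-r) hmr1 c1in Dmr.
set s1 := Num.sqrt (1 - c1 ^+ 2) in Br Bmr.
have s10 : 0 < s1.
  have c1lt : c1 < 1 by rewrite /c1; nra.
  have c1gt : 0 < c1 by rewrite /c1; nra.
  rewrite sqrtr_gt0; nra.
have B0 := BK_sum hconv s10 s10 Br Bmr.
rewrite subrr in B0.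
apply: full_contra; apply: (BK_full B0).
by rewrite dotp0l exprn_gt0 // addr_gt0.
Qed.

End Main.


Section Main2.
Variables (R : realType) (n : nat) (C : set 'rV[R]_(n.+1)).
Hypothesis hCS : C `<=` @sphere R n.
Hypothesis hne : C <> @sphere R n.
Hypothesis hcl : sclosed C.
Hypothesis hconv : sconvex C.
Hypothesis hint : sinterior C !=set0.
Hypothesis hB : exists b0, sboundary C b0.
Implicit Types (x y z w p q b v : 'rV[R]_(n.+1)).

Definition GG := [set c : R | 0 <= c /\ exists x, C x /\ deep C x c].

Lemma exC : exists x, C x.
Proof.
case: hint => xi [hxi [e e0 H]]; exists xi; apply: H => //.
by rewrite sdist_self.
Qed.

Lemma G1 : GG 1.
Proof.
split; first exact: ler01.
have [x Cx] := exC; exists x; split => // z hz hzx.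
have := unit_dot_le1 (hz : dotp z z = 1) (hCS Cx : dotp x x = 1).
by case/andP => _ h; move: hzx; rewrite ltNge h.
Qed.

Lemma G_lb : lbound GG 0.
Proof. by move=> c [h _]. Qed.

Lemma hasinfG : has_inf GG.
Proof. by split; [exists 1; exact: G1 | exists 0; exact: G_lb]. Qed.

Definition ssig := inf GG.

Lemma sig0 : 0 <= ssig.
Proof. by apply: lb_le_inf; [exists 1; exact: G1 | exact: G_lb]. Qed.

Lemma sig_le c : GG c -> ssig <= c.
Proof. by move=> Gc; apply: ge_inf => //; exists 0; exact: G_lb. Qed.

Lemma sig1 : ssig < 1.
Proof.
case: hint => xi [hxi [e e0 H]].
have hxi1 : dotp xi xi = 1 := hxi.
set c := Num.max 0 (cos (Num.min e pi)).
have c1 : c < 1 by rewrite /c gt_max ltr01 cos_min_lt1.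
apply: le_lt_trans c1; apply: sig_le; split; first by rewrite le_max lexx.
exists xi; split; first by apply: H => //; rewrite sdist_self.
move=> z hz hzx; apply: H => //.
have hz1 : dotp z z = 1 := hz.
rewrite /sdist dotpC; apply: acos_lt_of => //; first exact: unit_dot_le1.
by apply: le_lt_trans hzx; rewrite le_max lexx orbT.
Qed.

Lemma ball_G v (s : R) : 0 < s -> BK C v s ->
  s ^+ 2 <= dotp v v /\ exists c', GG c' /\ c' ^+ 2 = 1 - s ^+ 2 / dotp v v.
Proof.
move=> s0 Bv.
have [hlt|hge] := ltrP (dotp v v) (s ^+ 2).
  by exfalso; apply: (full_contra hCS hne); exact: BK_full Bv hlt.
split => //.
have vv0 : 0 < dotp v v by apply: lt_le_trans hge; rewrite exprn_gt0.
have v0 : v != 0 by apply/eqP => e; move: vv0; rewrite e dotp0l ltxx.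
have N0 := nrm_gt0 v0.
have N2 := nrm_sq v.
have Ni : 0 < (nrm v)^-1 by rewrite invr_gt0.
have Bm := BK_scale Ni Bv.
have sN : s <= nrm v.
  have -> : s = Num.sqrt (s ^+ 2) by rewrite sqrtr_sqr ger0_norm // ltW.
  by rewrite /nrm ler_sqrt ?sqr_ge0 ?dotp_ge0.
have r0 : 0 < (nrm v)^-1 * s by rewrite mulr_gt0 // invr_gt0.
have r1 : (nrm v)^-1 * s <= 1 by rewrite mulrC ler_pdivrMr // mul1r.
have hm : sphere (normz v) := normz_unit v0.
have Dm := ball_cap hm (introT andP (conj (ltW r0) r1)) Bm.
set c' := Num.sqrt (1 - ((nrm v)^-1 * s) ^+ 2) in Dm.
have rr : 0 <= 1 - ((nrm v)^-1 * s) ^+ 2 by rewrite subr_ge0 expr_le1 // ltW.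
have c'1 : c' < 1.
  have r2 : 0 < ((nrm v)^-1 * s) ^+ 2 by rewrite exprn_gt0.
  have : Num.sqrt (1 - ((nrm v)^-1 * s) ^+ 2) < Num.sqrt 1.
    by rewrite ltr_sqrt ?ltr01 //; lra.
  by rewrite sqrtr1.
exists c'; split.
  split; first exact: sqrtr_ge0.
  by exists (normz v); split => //; exact: deep_C hm c'1 Dm.
rewrite /c' sqr_sqrtr // -N2; congr (_ - _); rewrite exprMn exprVn mulrC //.
Qed.

Lemma conc x y (c : R) : C x -> C y -> ssig <= c < 1 -> deep C x c -> deep C y c ->
  dotp (x - y) (x - y) * (1 - ssig ^+ 2) <= 4 * (c ^+ 2 - ssig ^+ 2).
Proof.
move=> Cx Cy /andP[sc c1] Dx Dy.
have s0' := sig0.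
have hx : sphere x := hCS Cx. have hy : sphere y := hCS Cy.
have hx1 : dotp x x = 1 := hx. have hy1 : dotp y y = 1 := hy.
have cin : -1 <= c <= 1 by apply/andP; split; lra.
have Bx := cap_ball hx cin Dx.
have By := cap_ball hy cin Dy.
set s := Num.sqrt (1 - c ^+ 2) in Bx By.
have cc : 0 < 1 - c ^+ 2 by nra.
have s0 : 0 < s by rewrite sqrtr_gt0.
have s2 : s ^+ 2 = 1 - c ^+ 2 by rewrite sqr_sqrtr // ltW.
have Bxy := BK_sum hconv s0 s0 Bx By.
have [hge [c' [Gc' ec']]] := ball_G (addr_gt0 s0 s0) Bxy.
have sc' := sig_le Gc'.
case: Gc' => c'0 _.
have ss : ssig ^+ 2 <= c' ^+ 2 by nra.
set N2 := dotp (x + y) (x + y) in hge ec'.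
have N20 : 0 < N2 by apply: lt_le_trans hge; rewrite exprn_gt0 // addr_gt0.
have eN : dotp (x - y) (x - y) = 4 - N2.
  by rewrite /N2 !(dotpDl, dotpDr, dotpNl, dotpNr) hx1 hy1 (dotpC y x); ring.
set Q := (s + s) ^+ 2 / N2 in ec'.
have QN : Q * N2 = 4 * (1 - c ^+ 2).
  by rewrite /Q mulfVK ?gt_eqF // -s2; ring.
rewrite eN.
have h : ssig ^+ 2 <= 1 - Q by rewrite -ec'.
have : ssig ^+ 2 * N2 <= (1 - Q) * N2 by rewrite ler_pM2r.
rewrite mulrBl mul1r QN.
nra.
Qed.

End Main2.


Section Bounds.
Variables (R : realType) (n : nat).

Lemma dbound (z v : 'rV[R]_(n.+1)) (h : R) : dotp z z = 1 -> (forall i, `|v 0 i| <= h) ->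
  `|dotp z v| <= n.+1%:R * h.
Proof.
move=> hz hv.
apply: le_trans (ler_norm_sum _ _ _) _.
have -> : n.+1%:R * h = \sum_(i < n.+1) h by rewrite sumr_const card_ord mulr_natl.
apply: ler_sum => i _; rewrite normrM.
have zi : `|z 0 i| <= 1.
  have := coord_sq z i; rewrite hz -real_normK ?num_real // => h1.
  have := normr_ge0 (z 0 i); nra.
have := hv i; have := normr_ge0 (z 0 i); have := normr_ge0 (v 0 i); nra.
Qed.

Lemma ddbound (v : 'rV[R]_(n.+1)) (h : R) : (forall i, `|v 0 i| <= h) ->
  dotp v v <= n.+1%:R * h ^+ 2.
Proof.
move=> hv.
have -> : n.+1%:R * h ^+ 2 = \sum_(i < n.+1) h ^+ 2 by rewrite sumr_const card_ord mulr_natl.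
apply: ler_sum => i _; rewrite -expr2.
rewrite -real_normK ?num_real //.
have := hv i; have := normr_ge0 (v 0 i); nra.
Qed.

End Bounds.

Section Exist.
Variables (R : realType) (n : nat) (C : set 'rV[R]_(n.+1)).
Hypothesis hCS : C `<=` @sphere R n.
Hypothesis hne : C <> @sphere R n.
Hypothesis hcl : sclosed C.
Hypothesis hconv : sconvex C.
Hypothesis hint : sinterior C !=set0.
Implicit Types (x y z w p q b v : 'rV[R]_(n.+1)).

Let sg := ssig C.
Let sg0 : 0 <= sg := sig0 hCS hint.
Let sg1 : sg < 1 := sig1 hint.

Let ck (k : nat) := sg + (1 - sg) / (k.+2)%:R.

Let kpos (k : nat) : 0 < (k.+2)%:R :> R.
Proof. by rewrite ltr0n. Qed.

Let ck_gt k : sg < ck k.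
Proof. by rewrite /ck ltrDl divr_gt0 // subr_gt0. Qed.

Let ck_lt1 k : ck k < 1.
Proof.
have h2 : 1 < (k.+2)%:R :> R by rewrite ltr1n.
have h0 := kpos k. have h1 := sg1.
have h3 : (1 - sg) / (k.+2)%:R < 1 - sg.
  by rewrite ltr_pdivrMr // ltr_pMr // subr_gt0.
rewrite /ck; move: h3; set t := (1 - sg) / _; lra.
Qed.

Let ck_anti k j : (k <= j)%N -> ck j <= ck k.
Proof.
move=> kj; rewrite /ck lerD2l ler_pM2l ?subr_gt0 //.
by rewrite lef_pV2 ?posrE // ler_nat.
Qed.

Let ex_u : {u : nat -> 'rV[R]_(n.+1) & forall k, C (u k) /\ deep C (u k) (ck k)}.
Proof.
apply: (@choice nat _ (fun k x => C x /\ deep C x (ck k))) => k.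
have G0 : GG C !=set0 by exists 1; exact: G1 hCS hint.
have [c Gc cl] := inf_lt G0 (ck_gt k).
case: Gc => _ [x [Cx Dx]]; exists x; split => //.
by apply: deep_mono Dx _; rewrite ltW.
Qed.

Let u := projT1 ex_u.
Let hu : forall k, C (u k) /\ deep C (u k) (ck k) := projT2 ex_u.

Let diff_bound k j : (k <= j)%N -> dotp (u k - u j) (u k - u j) <= 8 / (k.+2)%:R.
Proof.
move=> kj.
have s0 := sg0; have s1 := sg1.
have [Ck Dk] := hu k; have [Cj Dj] := hu j.
have Dj' := deep_mono Dj (ck_anti kj).
have hc : sg <= ck k < 1 by rewrite ltW ?ck_gt ?ck_lt1.
have := conc hCS hne hconv hint Ck Cj hc Dk Dj'.
set D := dotp (u k - u j) (u k - u j).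
have D0 : 0 <= D := dotp_ge0 _.
set e := (1 - sg) / (k.+2)%:R.
have ce : ck k = sg + e by [].
have e0 : 0 < e by rewrite divr_gt0 // subr_gt0.
have e2 : e <= (1 - sg) / 2.
  rewrite /e ler_pM2l ?subr_gt0 // lef_pV2 ?posrE ?ltr0n //.
  by rewrite ler_nat.
rewrite ce => h.
have hh : D * (1 - sg) <= 8 * e.
  have h1 : D * (1 - sg) <= D * (1 - sg ^+ 2) by apply: ler_wpM2l => //; nra.
  have h2 : 4 * ((sg + e) ^+ 2 - sg ^+ 2) <= 8 * e.
    have -> : 4 * ((sg + e) ^+ 2 - sg ^+ 2) = 4 * e * (2 * sg + e) by ring.
    have -> : 8 * e = 4 * e * 2 by ring.
    apply: ler_wpM2l; first by nra.
    lra.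
  lra.
have -> : 8 / (k.+2)%:R = 8 * e / (1 - sg).
  by rewrite /e; field; rewrite ?gt_eqF ?subr_gt0 ?ltr0n.
by rewrite ler_pdivlMr // subr_gt0.
Qed.

Let eta (k : nat) := Num.sqrt (8 / (k.+2)%:R : R).

Let eta_sq k : eta k ^+ 2 = 8 / (k.+2)%:R.
Proof. by rewrite sqr_sqrtr // divr_ge0 // ler0n. Qed.

Let eta_ge0 k : 0 <= eta k.
Proof. exact: sqrtr_ge0. Qed.

Let eta_le2 k : eta k <= 2.
Proof.
have h : 8 / (k.+2)%:R <= 4 :> R.
  rewrite ler_pdivrMr //; have : 2 <= (k.+2)%:R :> R by rewrite ler_nat.
  lra.
move: h (eta_sq k) (eta_ge0 k); set t := 8 / _; set y := eta k; nra.
Qed.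

Let eta_anti k j : (k <= j)%N -> eta j <= eta k.
Proof.
move=> kj; rewrite /eta ler_sqrt ?divr_ge0 ?ler0n //.
by rewrite ler_pM2l // lef_pV2 ?posrE ?ltr0n // ler_nat.
Qed.

Let ck_eta k : ck k - sg <= eta k.
Proof.
have s0 := sg0.
have h1 : ck k - sg <= 1 / (k.+2)%:R.
  rewrite /ck addrC addKr ler_pM2r ?invr_gt0 //; lra.
have h2 : 1 / (k.+2)%:R = eta k ^+ 2 / 8 by rewrite eta_sq; field.
move: h1 h2 (eta_le2 k) (eta_ge0 k); set t := 1 / _; set y := eta k; set c := ck k; nra.
Qed.

Let coord_diff k j i : (k <= j)%N -> `|u k 0 i - u j 0 i| <= eta k.
Proof.
move=> kj.
have h := le_trans (coord_sq (u k - u j) i) (diff_bound kj).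
rewrite !mxE in h.
by rewrite -sqrtr_sqr /eta ler_sqrt ?divr_ge0 ?ler0n.
Qed.

Let xs (i : 'I_n.+1) := sup (range (fun m => u m 0 i - eta m)).

Let xs_close k i : `|xs i - u k 0 i| <= eta k.
Proof.
have ub : ubound (range (fun m => u m 0 i - eta m)) (u k 0 i + eta k).
  move=> _ [m _ <-].
  have [km|mk] := leqP k m.
    have := coord_diff i km; have := eta_ge0 m.
    move=> h1 /ler_normlP [h2 h3]; lra.
  have := coord_diff i (ltnW mk); have := eta_ge0 k.
  move=> h1 /ler_normlP [h2 h3]; lra.
have hs : has_sup (range (fun m => u m 0 i - eta m)).
  by split; [exists (u 0 0 i - eta 0); exists 0 | exists (u k 0 i + eta k)].
have h1 : xs i <= u k 0 i + eta k by apply: ge_sup => //; exists (u 0 0 i - eta 0); exists 0.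
have h2 : u k 0 i - eta k <= xs i by apply: sup_upper_bound => //; exists k.
by apply/ler_normlP; split; lra.
Qed.

Let eta_small e : 0 < e -> exists k, n.+1%:R * eta k < e.
Proof.
move=> e0.
set X := 8 / (e / n.+1%:R) ^+ 2.
have en : 0 < e / n.+1%:R by rewrite divr_gt0 // ltr0n.
have X0 : 0 <= X by rewrite divr_ge0 // ?exprn_ge0 // ltW.
have hX := archi_boundP X0.
set k := Num.Def.archi_bound X in hX.
exists k.
have kk : X < (k.+2)%:R by apply: (lt_le_trans hX); rewrite ler_nat -addn2 leq_addr.
have h8 : 8 / (k.+2)%:R < (e / n.+1%:R) ^+ 2.
  rewrite ltr_pdivrMr //; move: kk; rewrite /X ltr_pdivrMr ?exprn_gt0 //.
  by rewrite mulrC.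
have : eta k < e / n.+1%:R.
  rewrite /eta -(ger0_norm (ltW en)) -sqrtr_sqr ltr_sqrt ?exprn_gt0 //.
by move=> h; rewrite mulrC -ltr_pdivlMr ?ltr0n.
Qed.

Let x0 := \row_i xs i.
Let dk k := x0 - u k.
Let dk_bound k i : `|dk k 0 i| <= eta k.
Proof. by rewrite /dk /x0 !mxE. Qed.

Let x0E k : x0 = u k + dk k.
Proof. by rewrite /dk addrC subrK. Qed.

Let eta_n k : eta k <= n.+1%:R * eta k.
Proof. by rewrite ler_peMl ?eta_ge0 // ler1n. Qed.

Let x0_unit : dotp x0 x0 = 1.
Proof.
apply/eqP; rewrite -subr_eq0; apply/eqP.
set r := dotp x0 x0 - 1.
have bnd k : `|r| <= 4 * (n.+1%:R * eta k).
  have [Ck _] := hu k.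
  have hk1 : dotp (u k) (u k) = 1 := hCS Ck.
  have e : r = 2 * dotp (u k) (dk k) + dotp (dk k) (dk k).
    have gen : forall d, dotp (u k + d) (u k + d) - 1 = 2 * dotp (u k) d + dotp d d.
      by move=> d; rewrite !dotpDl !dotpDr hk1 (dotpC d (u k)); ring.
    by rewrite /r {1 2}(x0E k) gen.
  have b1 := dbound hk1 (dk_bound k).
  have b2 := ddbound (dk_bound k).
  have b3 : n.+1%:R * eta k ^+ 2 <= 2 * (n.+1%:R * eta k).
    have y2 := eta_le2 k; have y0 := eta_ge0 k.
    have t1 : 0 <= n.+1%:R * (eta k * (2 - eta k)).
      by apply: mulr_ge0; [exact: ler0n | apply: mulr_ge0; lra].
    move: t1; set N := n.+1%:R; set y := eta k; nra.
  have b4 := dotp_ge0 (dk k).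
  rewrite e; apply: le_trans (ler_normD _ _) _.
  rewrite normrM (ger0_norm (ler0n _ 2)) (ger0_norm b4).
  lra.
case: (eqVneq r 0) => // /eqP rn; exfalso.
have rp : 0 < `|r| / 4 by rewrite divr_gt0 // normr_gt0; apply/eqP.
have [k hk] := eta_small rp.
have := bnd k; lra.
Qed.

Let x0_sph : sphere x0. Proof. exact: x0_unit. Qed.

Let dot_x0_u k z : dotp z z = 1 -> `|dotp z x0 - dotp z (u k)| <= n.+1%:R * eta k.
Proof.
move=> hz; rewrite (x0E k) dotpDr addrC addKr; exact: dbound hz (dk_bound k).
Qed.

Let Cx0 : C x0.
Proof.
apply: hcl; first exact: x0_sph.
move=> e e0.
have hc := cos_min_lt1 e0.
have g0 : 0 < 1 - cos (Num.min e pi) by rewrite subr_gt0.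
have [k hk] := eta_small g0.
have [Ck _] := hu k.
have hk1 : dotp (u k) (u k) = 1 := hCS Ck.
exists (u k); split => //.
rewrite /sdist; apply: acos_lt_of => //; first exact: unit_dot_le1 x0_unit hk1.
have := dot_x0_u k hk1; rewrite hk1 (dotpC (u k) x0) => /ler_normlP [h1 h2].
move: hk h1 h2; set N := n.+1%:R * eta k; lra.
Qed.

Let deep_x0 : deep C x0 sg.
Proof.
move=> z hz hzx.
have hz1 : dotp z z = 1 := hz.
have d0 : 0 < (dotp z x0 - sg) / 2 by rewrite divr_gt0 // subr_gt0.
have [k hk] := eta_small d0.
have [_ Dk] := hu k.
apply: Dk hz _.
have h1 := ck_eta k.
have h2 := eta_n k.
have := dot_x0_u k hz1 => /ler_normlP [h3 h4].
move: hk h1 h2 h3 h4; set N := n.+1%:R * eta k; set c := ck k; set y := eta k; lra.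
Qed.

Lemma exists_center : exists x, C x /\ deep C x (ssig C).
Proof. by exists x0; split; [exact: Cx0 | exact: deep_x0]. Qed.

End Exist.


Lemma pihalf_ge0 (R : realType) : 0 <= pi / 2 :> R.
Proof. by rewrite divr_ge0 // pi_ge0. Qed.

Unset Implicit Arguments.

Theorem corollary2p7 (R : realType) (n : nat) (C : set 'rV[R]_(n.+1)) :
  C `<=` @sphere R n -> C <> @sphere R n ->
  sclosed C -> sconvex C -> sinterior C !=set0 ->
  exists x0, [/\ C x0,
    sdist_set x0 (sboundary C) =
      ereal_sup [set sdist_set x (sboundary C) | x in C],
    (forall x1, C x1 ->
       sdist_set x1 (sboundary C) =
         ereal_sup [set sdist_set x (sboundary C) | x in C] -> x1 = x0) &
    (ereal_sup [set (sdist y x0)%:E | y in C] <= (pi / 2)%:E)%E].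
Proof.
move=> hCS hne hcl hconv hint.
case: (boolp.EM (exists b0, sboundary C b0)) => [hB | nB]; last first.
  have Dinf x : sdist_set x (sboundary C) = +oo%E.
    apply/eqP; rewrite eq_le leey /=; apply: le_ereal_inf_tmp => _ [b Bb <-].
    by exfalso; apply: nB; exists b.
  have [xi Cxi] := exC hint.
  have deepm1 x : C x -> deep C x (-1).
    move=> Cx; apply: contrapT => nD.
    have [b [Bb _]] := no_deep hCS hcl Cx (lexx _) nD.
    by apply: nB; exists b.
  have [z [hz nCz]] := not_full hCS hne.
  have hz1 : dotp z z = 1 := hz.
  have eqz x : C x -> x = - z.
    move=> Cx; have hx1 : dotp x x = 1 := hCS _ Cx.
    have h : dotp z x <= -1.
      rewrite leNgt; apply/negP => h; apply: nCz; exact: deepm1 Cx z hz h.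
    have h2 := unit_dot_le1 hz1 hx1.
    apply: unit_eq => //; first by rewrite dotpNl dotpNr opprK.
    rewrite dotpNr dotpC; case/andP: h2 => h3 _; lra.
  have supE : ereal_sup [set sdist_set x (sboundary C) | x in C] = +oo%E.
    by apply: ereal_supy; exists xi => //.
  exists xi; split => //.
  - by rewrite supE Dinf.
  - by move=> x1 Cx1 _; rewrite (eqz _ Cx1) (eqz _ Cxi).
  apply: ge_ereal_sup => _ [y Cy <-].
  rewrite (eqz _ Cy) -(eqz _ Cxi) sdist_self ?lee_fin ?pihalf_ge0 //.
  exact: hCS.
set s := ssig C.
have s0 : 0 <= s := sig0 hCS hint.
have s1 : s < 1 := sig1 hint.
have sin : -1 <= s <= 1 by apply/andP; split; lra.
have [x0 [Cx0 Dx0]] := exists_center hCS hne hcl hconv hint.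
have hx0 : dotp x0 x0 = 1 := hCS _ Cx0.
set B := sboundary C.
have Dlow : ((acos s)%:E <= sdist_set x0 B)%E.
  apply: le_ereal_inf_tmp => _ [b Bb <-].
  have hb : dotp b b = 1 by case: Bb.
  rewrite lee_fin /sdist acos_leE //; last exact: unit_dot_le1.
  exact: bd_dot (hCS _ Cx0) Dx0 Bb.
have aspi : acos s < pi by apply: acos_ltpi; apply/andP; split; lra.
have as0 : 0 <= acos s by rewrite acos_ge0.
have Dup x : C x -> (sdist_set x B <= (acos s)%:E)%E.
  move=> Cx; have hx1 : dotp x x = 1 := hCS _ Cx.
  rewrite leNgt; apply/negP => hlt.
  have [t [t1 [t2 t3]]] : exists t, acos s < t /\ t < pi /\ (t%:E < sdist_set x B)%E.
    move: hlt; case: (sdist_set x B) => [r||] // hlt.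
      rewrite lte_fin in hlt.
      exists ((acos s + Num.min r pi) / 2).
      have m1 : acos s < Num.min r pi by rewrite lt_min hlt aspi.
      have m2 : Num.min r pi <= r by rewrite ge_min lexx.
      have m3 : Num.min r pi <= pi by rewrite ge_min lexx orbT.
      split; first lra.
      split; first lra.
      rewrite lte_fin; lra.
    exists ((acos s + pi) / 2); split; first lra.
    by split; [lra | rewrite ltey].
  have tin : t \in `[0, pi] by rewrite in_itv /=; apply/andP; split; lra.
  have asin : acos s \in `[0, pi] by rewrite in_itv /= as0 acos_lepi.
  set c := cos t.
  have cs : c < s.
    have e : cos (acos s) = s by rewrite acosK // in_itv /=.
    by rewrite -[X in _ < X]e /c ltr_cos.
  have pin : (pi : R) \in `[0, pi]%R by rewrite in_itv /= pi_ge0 lexx.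
  have cm1 : -1 < c by rewrite /c -cospi ltr_cos.
  have nD : ~ deep C x c.
    case: (lerP 0 c) => c0.
      move=> D; have : s <= c by apply: sig_le; split => //; exists x.
      lra.
    have := F3 hCS hne hconv Cx c0 hB. exact.
  have [b [Bb hb]] := no_deep hCS hcl Cx (ltW cm1) nD.
  have hb1 : dotp b b = 1 by case: Bb.
  have : (sdist_set x B <= (sdist x b)%:E)%E by apply: ereal_inf_lbound; exists b.
  have : sdist x b < t.
    rewrite /sdist -(cosK tin) -/c acos_ltE //; first exact: unit_dot_le1.
    by apply/andP; split; [exact: ltW | exact: cos_le1].
  move=> h1 h2.
  have := lt_le_trans t3 h2; rewrite lte_fin; lra.
have D0E : sdist_set x0 B = (acos s)%:E.
  by apply/eqP; rewrite eq_le Dup // Dlow.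
have supE : ereal_sup [set sdist_set x B | x in C] = (acos s)%:E.
  apply/eqP; rewrite eq_le; apply/andP; split.
    by apply: ge_ereal_sup => _ [x Cx <-]; exact: Dup.
  by rewrite -D0E; apply: ereal_sup_ubound; exists x0.
exists x0; split => //.
- by rewrite supE.
- move=> x1 Cx1; rewrite supE => D1.
  have hx1 : dotp x1 x1 = 1 := hCS _ Cx1.
  have Dx1 : deep C x1 s.
    apply: contrapT => nD.
    have [b [Bb hb]] := no_deep hCS hcl Cx1 (ltac:(lra) : -1 <= s) nD.
    have hb1 : dotp b b = 1 by case: Bb.
    have : (sdist_set x1 B <= (sdist x1 b)%:E)%E by apply: ereal_inf_lbound; exists b.
    rewrite D1 lee_fin /sdist acos_leE //; last exact: unit_dot_le1.
    lra.
  have ss : s <= s < 1 by rewrite lexx s1.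
  have := conc hCS hne hconv hint Cx1 Cx0 ss Dx1 Dx0.
  rewrite subrr mulr0 => h.
  have h2 : 0 < 1 - s ^+ 2 by nra.
  have h3 := dotp_ge0 (x1 - x0).
  have h4 : dotp (x1 - x0) (x1 - x0) = 0.
    apply/eqP; rewrite eq_le h3 andbT.
    nra.
  by apply/eqP; rewrite -subr_eq0; apply/eqP; apply: dotp_eq0.
apply: ge_ereal_sup => _ [y Cy <-].
have hy1 : dotp y y = 1 := hCS _ Cy.
have ya : 0 <= dotp y x0.
  rewrite leNgt; apply/negP => a0.
  set a := dotp y x0 in a0.
  have Bx0 := cap_ball (hCS _ Cx0) sin Dx0.
  set s' := Num.sqrt (1 - s ^+ 2) in Bx0.
  have ss0 : 0 < 1 - s ^+ 2 by nra.
  have s'0 : 0 < s' by rewrite sqrtr_gt0.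
  have s'2 : s' ^+ 2 = 1 - s ^+ 2 by rewrite sqr_sqrtr // ltW.
  have t0 : 0 < - a by rewrite oppr_gt0.
  have Bv := BK_translate hCS hconv Bx0 Cy t0.
  have [hge [c' [Gc' ec']]] := ball_G hCS hne s'0 Bv.
  have sc := sig_le Gc'; case: Gc' => c'0 _.
  have vv : dotp (x0 + - a *: y) (x0 + - a *: y) = 1 - a ^+ 2.
    rewrite !dotpDl !dotpDr !dotpZl !dotpZr hx0 hy1 (dotpC x0 y) -/a; ring.
  rewrite vv in hge ec'.
  have a2 : 0 < a ^+ 2 by nra.
  have vp : 0 < 1 - a ^+ 2 by apply: lt_le_trans hge; rewrite exprn_gt0.
  have q1 : s' ^+ 2 < s' ^+ 2 / (1 - a ^+ 2).
    rewrite ltr_pdivlMr //; have : 0 < s' ^+ 2 by rewrite exprn_gt0.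
    move=> hs; nra.
  have : s ^+ 2 <= c' ^+ 2 by nra.
  rewrite ec'; move: q1; rewrite s'2; set Q := (1 - s ^+ 2) / _; lra.
have h0 : -1 <= (0:R) <= 1 by rewrite lerN10 ler01.
have h1 := unit_dot_le1 hy1 hx0.
by rewrite lee_fin /sdist -acos0 acos_leE.
Qed.
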